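(* Let $\mathfrak{D}$, $\mathfrak{F}^{\mathfrak{D}}_\pm$, $g$, $x_d,x_{d'},\lambda_d$ be as in the standing setting, let $b=|W_\pm|$, and let $G=(V,E)$ be a graph. Then: (C1) If $G$ has no colouring with $2^{bk}$ colours, then for every $k$-generated valuation $\theta$ on $\mathfrak{F}^{\mathfrak{D}}_\pm\times G$ and every $m$, the formula $\gamma^{\mathfrak{D}}_m$ is true at every point of $(\mathfrak{F}^{\mathfrak{D}}_\pm\times G,\theta)$; in particular $\mathfrak{F}^{\mathfrak{D}}_\pm\times G\models\gamma^{\mathfrak{D}}_k$. (C2) If $G$ has a colouring with $N$ colours, then $\mathfrak{F}^{\mathfrak{D}}_\pm\times G\not\models\gamma^{\mathfrak{D}}_{N(b-1)+1}$.
   Context: Standing setting. Kripke frames $(W,(R_\lambda)_{\lambda\in\Lambda})$; a diagram is a finite pointed rooted frame $\mathfrak{D}=(\{x_0,\dots,x_n\},(R^{\mathfrak{D}}_\lambda),x_0)$ (every point reachable from $x_0$ by a directed path), and $\mathsf{e}^{\mathfrak{D}}(x_0)=\exists x_1\dots\exists x_n\bigwedge\{x_iR_\lambda x_j\mid x_iR^{\mathfrak{D}}_\lambda x_j\}$. An inner cycle is an undirected cycle (closed undirected path of positive length without immediate backtracking) not containing $x_0$. $\mathfrak{D}$ is globally minimal if deleting any single edge yields $\mathfrak{D}'$ such that $\forall x_0\mathsf{e}^{\mathfrak{D}'}(x_0)\to\forall x_0\mathsf{e}^{\mathfrak{D}}(x_0)$ is not first-order valid. Let $\mathfrak{D}$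 be a globally minimal rooted diagram with an inner cycle, and let $\mathfrak{F}^{\mathfrak{D}}_+=(W_\pm,(R^+_\lambda),w_0)$, $\mathfrak{F}^{\mathfrak{D}}_-=(W_\pm,(R^-_\lambda),w_0)$ be finite pointed frames, $x_d,x_{d'}\in W^{\mathfrak{D}}$, $\lambda_d\in\Lambda$, and $g:\mathfrak{D}\to\mathfrak{F}^{\mathfrak{D}}_+$ an injective homomorphism (edge-preserving, $g(x_0)=w_0$) such that: (C-i) $R^-_{\lambda_d}=R^+_{\lambda_d}\setminus\{(g(x_d),g(x_{d'}))\}$ where this pair lies in $R^+_{\lambda_d}$, and $R^-_\lambda=R^+_\lambda$ for $\lambda\ne\lambda_d$; (C-ii) $\mathfrak{F}^{\mathfrak{D}}_-\not\models\mathsf{e}^{\mathfrak{D}}(w_0)$; (C-iii) $\mathfrak{F}^{\mathfrak{D}}_+\models\mathsf{e}^{\mathfrak{D}}(w_0)$; (C-iv) $g(x_d),g(x_{d'})$ are joined in $\mathfrak{F}^{\mathfrak{D}}_-$ by an undirected path avoiding $w_0$ with all points in $g(W^{\mathfrak{D}})$; (C-v) every homomorphism $h:\mathfrak{D}\to\mathfrak{F}^{\mathfrak{D}}_+$ has image $g(W^{\mathfrak{D}})$ and satisfies $h(x_i)R^+_\lambda h(x_j)\Rightarrow x_iR^{\mathfrak{D}}_\lambda x_j$; (C-vi) $\mathfrak{F}^{\mathfrak{D}}_-\models\mathsf{e}^{\mathfrak{D}}(w)$ for all $w\in W_\pm\setminus\{w_0\}$. A graph is $G=(V,E)$ with $E$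 symmetric (loops allowed); an $N$-colouring is $\tau:V\to N$ with $\tau(v_1)\ne\tau(v_2)$ whenever $\{v_1,v_2\}\in E$. The pseudoproduct $\mathfrak{F}^{\mathfrak{D}}_\pm\times G$ has carrier $\{w_0\}\cup(W_\pm\setminus\{w_0\})\times V$; with $pr(w_0)=w_0$, $pr((y,v))=y$, $\pi(w_0)=\bot$, $\pi((y,v))=v$ ($\bot\notin V$), we have $\eta R_\lambda\chi$ iff either $pr(\eta)R^-_\lambda pr(\chi)$ and ($\pi(\eta)=\pi(\chi)$ or $\bot\in\{\pi(\eta),\pi(\chi)\}$), or $(pr(\eta),pr(\chi))\in R^+_\lambda\setminus R^-_\lambda$ and $\{\pi(\eta),\pi(\chi)\}\in E$. A valuation is $k$-generated if at most $k$ propositional variables get nonempty value. The formulas $\gamma^{\mathfrak{D}}_m$ are defined from a fixed spanning tree $\mathfrak{T}$ of $\mathfrak{D}$ (subframe on the same points, $R^{\mathfrak{T}}_\lambda\subseteq R^{\mathfrak{D}}_\lambda$, no edges into $x_0$, unique directed path from $x_0$ to each point) of depth $d$: with nominals $j_i$, $\chi_i=j_i\wedge\bigwedge_{x_iR^{\mathfrak{D}}_\lambda x_k}\Diamond_\lambda j_k$, $\eta_i=\chi_i\wedge\bigwedge_{x_iR^{\mathfrak{T}}_\lambda x_k}\Diamond_\lambda\eta_k$ (recursively from leaves), $\eta^{\mathfrak{D}}=\eta_0$, $\gamma^{\mathfrak{D}}_{\Psi}=\bigvee_{\kappa:\{0..n\}\to\Psi}\eta^{\mathfrak{D}}[\kappa(l)/j_l]$,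 and $\gamma^{\mathfrak{D}}_m=\Box^{\le d}(p_1\vee\dots\vee p_m)\to\gamma^{\mathfrak{D}}_{\{p_1,\dots,p_m\}}$, where $\Box^{\le d}\phi$ is the conjunction of all $\Box_{\lambda_1}\cdots\Box_{\lambda_k}\phi$, $k\le d$, $\lambda_i$ among indices occurring in $\mathfrak{D}$. *)

(* Defs.v *)
From mathcomp Require Import all_boot.
Set Implicit Arguments. Unset Strict Implicit. Unset Printing Implicit Defensive.

(* A diagram on points x_0..x_n ('I_n.+1, x_0 = ord0) is given by its finite
   list of labelled edges (x_i, lambda, x_j), meaning x_i R_lambda x_j. *)
Definition edge (n : nat) (L : eqType) := ('I_n.+1 * L * 'I_n.+1)%type.

Section Diagrams.
Variables (n : nat) (L : eqType).
Implicit Types (E ET : seq (edge n L)).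

Definition is_hom E (W : Type) (R : L -> W -> W -> Prop) (w : W) (h : 'I_n.+1 -> W) :=
  h ord0 = w /\ forall e, e \in E -> R e.1.2 (h e.1.1) (h e.2).

Definition dsat E (W : Type) (R : L -> W -> W -> Prop) (w : W) : Prop :=
  exists f : 'I_n.+1 -> W, f ord0 = w /\ forall e, e \in E -> R e.1.2 (f e.1.1) (f e.2).

Definition dedge E : rel 'I_n.+1 :=
  fun i j => has (fun e : edge n L => (e.1.1 == i) && (e.2 == j)) E.

Definition rooted E := forall i : 'I_n.+1, connect (dedge E) ord0 i.

Definition globally_minimal E :=
  forall e, e \in E ->
    ~ (forall (W : Type) (R : L -> W -> W -> Prop),
          (forall w, dsat (rem e E) R w) -> forall w, dsat E R w).

Definition usrc (s : edge n L * bool) : 'I_n.+1 := if s.2 then s.1.1.1 else s.1.2.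
Definition udst (s : edge n L * bool) : 'I_n.+1 := if s.2 then s.1.2 else s.1.1.1.
Definition ustep : rel (edge n L * bool) :=
  fun s t => (udst s == usrc t) && (s.1 != t.1).

Definition has_inner_cycle E :=
  exists (s : edge n L * bool) (p : seq (edge n L * bool)),
    [/\ all (fun t => t.1 \in E) (s :: p), path ustep s p,
        udst (last s p) = usrc s & all (fun t => usrc t != ord0) (s :: p)].

Fixpoint dpath ET (u : 'I_n.+1) (p : seq (edge n L)) (v : 'I_n.+1) : Prop :=
  match p with
  | [::] => u = v
  | e :: p' => [/\ e \in ET, e.1.1 = u & dpath ET e.2 p' v]
  end.

Definition spanning_tree E ET :=
  [/\ forall e, e \in ET -> e \in E,
      forall e, e \in ET -> e.2 != ord0
    & forall i : 'I_n.+1, exists p, dpath ET ord0 p i /\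
                                    forall q, dpath ET ord0 q i -> q = p].

Definition tree_depth ET (d : nat) :=
  (forall i p, dpath ET ord0 p i -> size p <= d) /\
  (exists i p, dpath ET ord0 p i /\ size p = d).

End Diagrams.

Inductive form (L : Type) :=
| FVar of nat | FTop | FBot
| FAnd of form L & form L | FOr of form L & form L | FImp of form L & form L
| FDia of L & form L | FBox of L & form L.
Arguments FVar {L}. Arguments FTop {L}. Arguments FBot {L}.

Fixpoint holds (L : Type) (W : Type) (R : L -> W -> W -> Prop) (th : nat -> W -> Prop)
    (f : form L) (w : W) : Prop :=
  match f with
  | FVar p => th p w
  | FTop => True
  | FBot => False
  | FAnd a b => holds R th a w /\ holds R th b w
  | FOr a b => holds R th a w \/ holds R th b w
  | FImp a b => holds R th a w -> holds R th b w
  | FDia l a => exists u, R l w u /\ holds R th a u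
  | FBox l a => forall u, R l w u -> holds R th a u
  end.

Definition fvalid (L : Type) (W : Type) (R : L -> W -> W -> Prop) (f : form L) :=
  forall (th : nat -> W -> Prop) (w : W), holds R th f w.

Definition kgen (W : Type) (th : nat -> W -> Prop) (k : nat) :=
  exists s : seq nat, size s <= k /\ forall p, p \notin s -> forall w, ~ th p w.

Definition bigAnd (L : Type) (s : seq (form L)) := foldr (@FAnd L) FTop s.
Definition bigOr (L : Type) (s : seq (form L)) := foldr (@FOr L) FBot s.

Fixpoint words (L : Type) (s : seq L) (k : nat) : seq (seq L) :=
  match k with
  | 0 => [:: [::]]
  | k'.+1 => flatten [seq [seq x :: w | w <- words s k'] | x <- s]
  end.

Definition boxes (L : Type) (ls : seq L) (phi : form L) := foldr (@FBox L) phi ls.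

Definition boxle (L : Type) (s : seq L) (d : nat) (phi : form L) :=
  bigAnd (flatten [seq [seq boxes w phi | w <- words s k] | k <- iota 0 d.+1]).

Section Gamma.
Variables (n : nat) (L : eqType) (E ET : seq (edge n L)) (d : nat).

Definition dlabels := undup [seq e.1.2 | e <- E].

(* chi_i, with the nominal j_l replaced by the variable kap l *)
Definition chi (kap : 'I_n.+1 -> nat) (i : 'I_n.+1) : form L :=
  FAnd (FVar (kap i))
       (bigAnd [seq FDia e.1.2 (FVar (kap e.2)) | e <- E & e.1.1 == i]).

(* eta_i, built recursively along the tree ET (fuel >= height of the subtree) *)
Fixpoint eta (fuel : nat) (kap : 'I_n.+1 -> nat) (i : 'I_n.+1) : form L :=
  FAnd (chi kap i)
       (match fuel with
        | 0 => FTop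
        | f.+1 => bigAnd [seq FDia e.1.2 (eta f kap e.2) | e <- ET & e.1.1 == i]
        end).

(* propositional variables p_1, ..., p_m are FVar 1, ..., FVar m *)
Definition gammaPsi (m : nat) : form L :=
  bigOr [seq eta d (fun l => (kap l : nat).+1) ord0 | kap : {ffun 'I_n.+1 -> 'I_m} <- enum {ffun 'I_n.+1 -> 'I_m}].

Definition gamma (m : nat) : form L :=
  FImp (boxle dlabels d (bigOr [seq FVar i | i <- iota 1 m])) (gammaPsi m).

End Gamma.

Fixpoint chain (T : Type) (r : T -> T -> Prop) (x : T) (p : seq T) : Prop :=
  match p with
  | [::] => True
  | y :: p' => r x y /\ chain r y p'
  end.

Definition colourable (V : Type) (EG : V -> V -> Prop) (N : nat) :=
  exists tau : V -> 'I_N, forall v1 v2, EG v1 v2 -> tau v1 <> tau v2.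

Section Pseudo.
Variables (L : Type) (Wpm : finType) (w0 : Wpm) (Rp Rm : L -> Wpm -> Wpm -> Prop)
          (V : Type) (EG : V -> V -> Prop).

(* carrier {w0} u (W \ {w0}) x V ; None stands for w0 *)
Definition pp_car := option ({y : Wpm | y != w0} * V)%type.
Definition pr (x : pp_car) : Wpm := if x is Some yv then val yv.1 else w0.
Definition piV (x : pp_car) : option V := omap snd x.  (* None = bottom *)

Definition pp_rel (l : L) (x y : pp_car) : Prop :=
  (Rm l (pr x) (pr y) /\ (piV x = piV y \/ piV x = None \/ piV y = None)) \/
  ((Rp l (pr x) (pr y) /\ ~ Rm l (pr x) (pr y)) /\
     exists v1 v2, [/\ piV x = Some v1, piV y = Some v2 & EG v1 v2]).
End Pseudo.
Arguments pp_rel [L Wpm] w0 Rp Rm [V] EG l x y.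

(* Main.v *)
Require Import Defs.
From mathcomp Require Import all_boot.
From Stdlib Require Import ClassicalEpsilon Classical.
From mathcomp Require Import zify.
Set Implicit Arguments. Unset Strict Implicit. Unset Printing Implicit Defensive.

Section HoldsLemmas.
Variables (L : Type) (W : Type) (R : L -> W -> W -> Prop) (th : nat -> W -> Prop).

Lemma holds_bigAnd_map (T : eqType) (F : T -> form L) (s : seq T) w :
  holds R th (bigAnd (map F s)) w <-> (forall x, x \in s -> holds R th (F x) w).
Proof.
elim: s => [|a s IH] /=; first by split => // _ x.
split.
- case=> Ha /IH Hs x; rewrite in_cons => /orP [/eqP->|Hx] //; exact: Hs.
- move=> H; split; first by apply: H; rewrite mem_head.
  apply/IH => x Hx; apply: H; by rewrite in_cons Hx orbT.
Qed.

Lemma holds_bigOr_map (T : eqType) (F : T -> form L) (s : seq T) w :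
  holds R th (bigOr (map F s)) w <-> (exists x, x \in s /\ holds R th (F x) w).
Proof.
elim: s => [|a s IH] /=; first by split => // [[x []]].
split.
- case=> [Ha|/IH [x [Hx Hs]]]; first by exists a; rewrite mem_head.
  by exists x; by rewrite in_cons Hx orbT.
- case=> x []; rewrite in_cons => /orP [/eqP->|Hx Hh]; first by left.
  by right; apply/IH; exists x.
Qed.

Lemma holds_bigAnd_cat s1 s2 w : holds R th (bigAnd (s1 ++ s2)) w <->
   holds R th (bigAnd s1) w /\ holds R th (bigAnd s2) w.
Proof. elim: s1 => [|a s IH] /=; first by tauto. by move: IH; tauto. Qed.

Lemma holds_bigAnd_flatten (T : eqType) (G : T -> seq (form L)) (t : seq T) w :
  holds R th (bigAnd (flatten (map G t))) w <->
  (forall x, x \in t -> holds R th (bigAnd (G x)) w).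
Proof.
elim: t => [|a t IH] /=; first by split => // _ x.
have := holds_bigAnd_cat (G a) (flatten (map G t)) w.
split.
- move/H => [Ha /IH Hs] x; rewrite in_cons => /orP [/eqP->|Hx] //; exact: Hs.
- move=> H1; apply/H; split; first by apply: H1; rewrite mem_head.
  apply/IH => x Hx; apply: H1; by rewrite in_cons Hx orbT.
Qed.

Lemma holds_boxes_all (phi : form L) ws :
  (forall w, holds R th phi w) -> forall w, holds R th (boxes ws phi) w.
Proof. move=> H; elim: ws => [|l ws IH] //= w u _; exact: IH. Qed.

Lemma holds_imp a b w : holds R th (FImp a b) w = (holds R th a w -> holds R th b w).
Proof. by []. Qed.

End HoldsLemmas.

Lemma words_mem (L : eqType) (s : seq L) (ws : seq L) :
  all (fun x => x \in s) ws -> ws \in words s (size ws).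
Proof.
elim: ws => [|a ws IH] //= /andP [Ha Hws].
apply/flatten_mapP; exists a => //; exact: map_f (IH Hws).
Qed.

Lemma holds_boxle (L : eqType) W (R : L -> W -> W -> Prop) th s d phi w ws :
  holds R th (boxle s d phi) w -> all (fun x => x \in s) ws -> size ws <= d ->
  holds R th (boxes ws phi) w.
Proof.
rewrite /boxle => /holds_bigAnd_flatten H Hs Hd.
have := H (size ws); rewrite mem_iota /= add0n ltnS => /(_ Hd).
move/holds_bigAnd_map; apply; exact: words_mem.
Qed.

Section GammaS.
Variables (L : eqType) (n : nat) (E ET : seq (edge n L)) (d : nat).
Variables (W : Type) (R : L -> W -> W -> Prop) (th : nat -> W -> Prop) (m : nat).

Lemma holds_chi kap i w :
  holds R th (chi E kap i) w <-> th (kap i) w /\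
   (forall e, e \in E -> e.1.1 = i -> exists u, R e.1.2 w u /\ th (kap e.2) u).
Proof.
rewrite /chi; split.
- case=> H1 /holds_bigAnd_map H2; split => // e He Hi.
  by apply: H2; rewrite mem_filter He Hi eqxx.
- case=> H1 H2; split => //; apply/holds_bigAnd_map => e.
  rewrite mem_filter => /andP [/eqP Hi He]; exact: H2.
Qed.

Lemma dpath_mem p i j e : dpath ET i p j -> e \in p -> e \in ET.
Proof.
elim: p i => [|a p IH] i //= [Ha _ Hp]; rewrite in_cons => /orP [/eqP->//|]; exact: IH Hp.
Qed.

Lemma dpath_S (S : 'I_n.+1 -> W -> Prop) (phi : form L) :
  (forall e, e \in E -> forall w, S e.1.1 w -> exists u, R e.1.2 w u /\ S e.2 u) ->
  (forall e, e \in ET -> e \in E) ->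
  forall p i j w, dpath ET i p j -> S i w -> holds R th (boxes [seq e.1.2 | e <- p] phi) w ->
  exists w', S j w' /\ holds R th phi w'.
Proof.
move=> HS Hsub; elim=> [|e p IH] i j w /=.
- by move=> -> Hw Hp; exists w.
- case=> He Hi Hp Hw Hb.
  have Sw' : S e.1.1 w by rewrite Hi.
  have [u [Ru Su]] := HS e (Hsub e He) w Sw'.
  exact: IH Hp Su (Hb u Ru).
Qed.

Lemma gamma_from_S (x : W) (S : 'I_n.+1 -> W -> Prop) :
  spanning_tree E ET -> tree_depth ET d ->
  S ord0 x ->
  (forall e, e \in E -> forall w, S e.1.1 w -> exists u, R e.1.2 w u /\ S e.2 u) ->
  (forall j w w' p, p \in iota 1 m -> S j w -> S j w' -> th p w -> th p w') ->
  holds R th (gamma E ET d m) x.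
Proof.
move=> [Hsub _ Hpath] [Hdep _] S0 HS Hag.
rewrite /gamma holds_imp => Hprem.
pose phi : form L := bigOr [seq FVar i | i <- iota 1 m].
have reach : forall j, exists o : 'I_m, exists w, S j w /\ th o.+1 w.
  move=> j; have [p [Hp _]] := Hpath j.
  have Hb : holds R th (boxes [seq e.1.2 | e <- p] phi) x.
    apply: holds_boxle Hprem _ _; last by rewrite size_map; exact: Hdep Hp.
    apply/allP => l /mapP [e He ->]; rewrite /dlabels mem_undup; apply: map_f.
    exact: Hsub (dpath_mem Hp He).
  have [w [Sw /holds_bigOr_map [q [Hq Hth]]]] := dpath_S (phi:=phi) HS Hsub Hp S0 Hb.
  move: Hq; rewrite mem_iota => /andP [H1 H2].
  have Hq' : q.-1 < m by lia.
  exists (Ordinal Hq'), w; split => //=; rewrite prednK //.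
pose kap0 j := proj1_sig (constructive_indefinite_description _ (reach j)).
have Hkap0 : forall j, exists w, S j w /\ th (kap0 j).+1 w.
  move=> j; exact: proj2_sig (constructive_indefinite_description _ (reach j)).
pose kf := [ffun j => kap0 j].
have Hall : forall j w, S j w -> th (kf j).+1 w.
  move=> j w Sw; rewrite ffunE; have [w' [Sw' Hw']] := Hkap0 j.
  apply: Hag Sw' Sw Hw'; rewrite mem_iota; have := ltn_ord (kap0 j); lia.
apply/holds_bigOr_map; exists kf; split; first by rewrite mem_enum.
suff: forall f i w, S i w -> holds R th (eta E ET f (fun l => (kf l : nat).+1) i) w by apply.
have Hchi : forall i w, S i w -> holds R th (chi E (fun l => (kf l : nat).+1) i) w.
  move=> i w Sw; apply/holds_chi; split; first exact: Hall.
  move=> e He Hi; have Sw' : S e.1.1 w by rewrite Hi.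
  have [u [Ru Su]] := HS e He w Sw'.
  exists u; split => //; exact: Hall.
elim=> [|f IH] i w Sw; (split; [exact: Hchi|]) => //=.
apply/holds_bigAnd_map => e; rewrite mem_filter => /andP [/eqP Hi He].
have Sw' : S e.1.1 w by rewrite Hi.
  have [u [Ru Su]] := HS e (Hsub e He) w Sw'.
exists u; split => //; exact: IH.
Qed.

Lemma eta_head kap f i w : holds R th (eta E ET f kap i) w -> holds R th (chi E kap i) w.
Proof. by case: f => [|f] []. Qed.

Lemma eta_chi kap : forall p f i j w, holds R th (eta E ET f kap i) w -> dpath ET i p j ->
  size p <= f -> exists w', holds R th (chi E kap j) w'.
Proof.
elim=> [|e p IH] f i j w.
- by case: f => [|f] [Hc _] /= Hij _; subst j; exists w.
- case: f => [|f] Hh [He Hi Hp] Hs //.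
  case: Hh => _ /holds_bigAnd_map Hb.
  have Hm : e \in [seq x <- ET | x.1.1 == i] by rewrite mem_filter Hi eqxx He.
  have [u [_ Hu]] := Hb e Hm.
  exact: IH Hu Hp Hs.
Qed.

End GammaS.

Definition bitb (P : Prop) : bool := if excluded_middle_informative P then true else false.
Lemma bitbP P Q : bitb P = bitb Q -> (P <-> Q).
Proof.
rewrite /bitb; case: excluded_middle_informative; case: excluded_middle_informative => //; tauto.
Qed.

Section Pseudo2.
Variables (L : eqType) (Wpm : finType) (w0 : Wpm) (Rp Rm : L -> Wpm -> Wpm -> Prop)
  (V : Type) (EG : V -> V -> Prop).
Local Notation W := (pp_car w0 V).
Local Notation R := (pp_rel w0 Rp Rm EG).

Definition lift (z : Wpm) (v : V) : W :=
  match (insub z : option {y : Wpm | y != w0}) with Some y => Some (y, v) | None => None end.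

Lemma pr_lift z v : pr (lift z v) = z.
Proof. rewrite /lift; case: insubP => [y _ <-|/negbNE/eqP ->] //. Qed.

Lemma lift_w0 v : lift w0 v = None.
Proof. by rewrite /lift insubF // eqxx. Qed.

Lemma piV_lift z v : piV (lift z v) = None \/ piV (lift z v) = Some v.
Proof. rewrite /lift; case: insubP => [y _ _|_] /=; auto. Qed.

Lemma piV_lift_ne z v : z != w0 -> piV (lift z v) = Some v.
Proof. by rewrite /lift; case: insubP => [y _ _|/negP] //. Qed.

Lemma lift_val (y : {y : Wpm | y != w0}) v : lift (val y) v = Some (y, v).
Proof. by rewrite /lift valK. Qed.

Lemma lift_rel l z1 z2 v : Rm l z1 z2 -> R l (lift z1 v) (lift z2 v).
Proof.
move=> H; left; rewrite !pr_lift; split => //.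
case: (piV_lift z1 v) => ->; first by right; left.
case: (piV_lift z2 v) => ->; [right; right | left] => //.
Qed.

Lemma colour_pair k (s : seq nat) (th : nat -> W -> Prop) :
  size s <= k -> ~ colourable EG (2 ^ (#|Wpm| * k)) ->
  exists v1 v2, EG v1 v2 /\
    forall y p, p \in s -> (th p (Some (y, v1)) <-> th p (Some (y, v2))).
Proof.
move=> Hs Hc.
pose T (v : V) : {ffun Wpm * 'I_k -> bool} := [ffun yj : Wpm * 'I_k =>
   if (insub yj.1 : option {y : Wpm | y != w0}) is Some y
   then bitb (th (nth 0 s yj.2) (Some (y, v))) else false].
have Hcard : #|{ffun Wpm * 'I_k -> bool}| = 2 ^ (#|Wpm| * k).
  by rewrite card_ffun card_bool card_prod card_ord.
pose tau v := cast_ord Hcard (enum_rank (T v)).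
have [v1 [v2 [H12 Ht]]] : exists v1 v2, EG v1 v2 /\ tau v1 = tau v2.
  apply: NNPP => Hn; apply: Hc; exists tau => v1 v2 H Heq; apply: Hn; by exists v1, v2.
exists v1, v2; split => // y p Hp.
have HT : T v1 = T v2 by apply: enum_rank_inj; exact: cast_ord_inj Ht.
have Hi : index p s < k by rewrite (leq_trans _ Hs) // index_mem.
have := congr1 (fun f : {ffun Wpm * 'I_k -> bool} => f (val y, Ordinal Hi)) HT; rewrite /= !ffunE /= valK nth_index //.
exact: bitbP.
Qed.

Variables (n : nat) (E ET : seq (edge n L)) (d : nat) (xd xd' : 'I_n.+1) (ld : L)
  (g : 'I_n.+1 -> Wpm).

Lemma C1core k (s : seq nat) th m :
  spanning_tree E ET -> tree_depth ET d -> is_hom E Rp w0 g ->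
  (forall l u v, Rm l u v <-> (Rp l u v /\ ~ (l = ld /\ u = g xd /\ v = g xd'))) ->
  g xd != w0 -> g xd' != w0 ->
  (forall w, w <> w0 -> dsat E Rm w) ->
  (forall v1 v2, EG v1 v2 -> EG v2 v1) ->
  size s <= k -> (forall p, p \in iota 1 m -> p \notin s -> forall w, ~ th p w) ->
  ~ colourable EG (2 ^ (#|Wpm| * k)) ->
  forall x, holds R th (gamma E ET d m) x.
Proof.
move=> HST HTD [Hg0 Hhom] Hiff Hxd Hxd' Hvi Hsym Hs Hnot Hc.
have [v1 [v2 [H12 AG]]] := colour_pair th Hs Hc.
have AG' : forall y p, p \in iota 1 m -> (th p (Some (y, v1)) <-> th p (Some (y, v2))).
  move=> y p Hp; case: (boolP (p \in s)) => Hps; first exact: AG.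
  by split => /(Hnot p Hp Hps).
case=> [[y v]|].
- have Hy : val y <> w0 by move=> He; move: (valP y); rewrite He eqxx.
  have [f [f0 Hf]] := Hvi _ Hy.
  apply: (gamma_from_S (S := fun j w => w = lift (f j) v)) => //.
  + by rewrite f0 lift_val.
  + move=> e He w ->; exists (lift (f e.2) v); split => //; apply: lift_rel; exact: Hf.
  + by move=> j w w' p _ -> ->.
- apply: (gamma_from_S (S := fun j w => exists c, (c = v1 \/ c = v2) /\ w = lift (g j) c)) => //.
  + by exists v1; split; [left | rewrite Hg0 lift_w0].
  + move=> e He w [c [Hc' ->]].
    have Hp := Hhom e He.
    case: (classic (Rm e.1.2 (g e.1.1) (g e.2))) => HRm.
    * exists (lift (g e.2) c); split; [exact: lift_rel | by exists c].
    * have [Hl [H1 H2]] : e.1.2 = ld /\ g e.1.1 = g xd /\ g e.2 = g xd'.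
        apply: NNPP => Hn; apply: HRm; apply/Hiff; by split.
      have [c' [Hc'' Hcc']] : exists c', (c' = v1 \/ c' = v2) /\ EG c c'.
        by case: Hc' => ->; [exists v2 | exists v1]; split; auto.
      exists (lift (g e.2) c'); split; last by exists c'.
      right; rewrite !pr_lift; split; first by split.
      exists c, c'; split => //; apply: piV_lift_ne; by rewrite ?H1 ?H2.
  + move=> j w w' p Hp [c [Hc1 ->]] [c' [Hc2 ->]].
    rewrite /lift; case: insubP => [y' _ _|] // .
    have := AG' y' p Hp.
    by case: Hc1 => ->; case: Hc2 => ->; tauto.
Qed.

Lemma C2core N :
  spanning_tree E ET -> tree_depth ET d -> injective g ->
  (forall l u v, Rm l u v <-> (Rp l u v /\ ~ (l = ld /\ u = g xd /\ v = g xd'))) ->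
  ~ dsat E Rm w0 ->
  (exists p : seq Wpm,
      [/\ chain (fun a c => exists l, Rm l a c \/ Rm l c a) (g xd) p,
          last (g xd) p = g xd'
        & forall a, a \in g xd :: p -> a <> w0 /\ exists i, g i = a]) ->
  (forall h : 'I_n.+1 -> Wpm, is_hom E Rp w0 h ->
      (forall w, (exists i, h i = w) <-> (exists i, g i = w)) /\
      (forall i j l, Rp l (h i) (h j) -> (i, l, j) \in E)) ->
  colourable EG N ->
  ~ fvalid R (gamma E ET d (N * (#|Wpm| - 1) + 1)).
Proof.
move=> HST HTD Hginj Hiff Hnd [p [Hch Hlast Hpts]] Hv [tau Htau] Hval.
pose S := {y : Wpm | y != w0}.
pose code (c : 'I_N) (y : S) : nat := (enum_rank (c, y) : nat).+2.
have code_inj : forall c c' y y', code c y = code c' y' -> c = c' /\ y = y'.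
  move=> c c' y y' H.
  have : enum_rank (c, y) = enum_rank (c', y') by apply: ord_inj; case: H.
  by move/enum_rank_inj => [-> ->].
have HC : #|[pred x | x != w0]| = #|Wpm| - 1.
  by rewrite subn1 -(cardC1 w0); apply: eq_card => x.
have Hcard : #|{: 'I_N * S}| = N * (#|Wpm| - 1).
  by rewrite card_prod card_ord card_sig HC.
have code_bd : forall c y, 1 <= code c y <= N * (#|Wpm| - 1) + 1.
  move=> c y; rewrite /code; case: (enum_rank (c, y)) => r /=.
  rewrite card_prod card_ord card_sig HC => Hr; by rewrite addn1 ltnS.
pose th : nat -> W -> Prop := fun q x =>
  match x with None => q = 1 | Some yv => q = code (tau yv.2) yv.1 end.
pose col (x : W) := omap tau (piV x).
have F : forall q a b, th q a -> th q b -> pr a = pr b /\ col a = col b.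
  move=> q [[y v]|] [[y' v']|] /=.
  - by move=> -> /code_inj [Hc ->]; rewrite /col /= Hc.
  - move=> -> H; exfalso; move: H; rewrite /code; lia.
  - move=> -> H; exfalso; move: H; rewrite /code; lia.
  - by [].
pose M := N * (#|Wpm| - 1) + 1.
have Hphi : forall w, holds R th (bigOr [seq FVar i | i <- iota 1 M]) w.
  move=> w; apply/holds_bigOr_map; case: w => [[y v]|].
  - exists (code (tau v) y); split => //; rewrite mem_iota; have := code_bd (tau v) y.
    rewrite /M; lia.
  - exists 1; split => //; rewrite mem_iota /M; lia.
have := Hval th None; rewrite /gamma holds_imp.
have Hprem : holds R th (boxle (dlabels E) d (bigOr [seq FVar i | i <- iota 1 M])) None.
  apply/holds_bigAnd_flatten => k _; apply/holds_bigAnd_map => ws _.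
  exact: holds_boxes_all.
move=> /(_ Hprem) /holds_bigOr_map [kf [_ Heta]].
pose kap := fun l : 'I_n.+1 => (kf l : nat).+1.
have A : forall j, exists w, holds R th (chi E kap j) w.
  case: HST => _ _ Hpath; case: HTD => Hdep _.
  move=> j; have [q [Hq _]] := Hpath j.
  exact: eta_chi Heta Hq (Hdep _ _ Hq).
pose wit j := proj1_sig (constructive_indefinite_description _ (A j)).
have Hwit : forall j, holds R th (chi E kap j) (wit j).
  move=> j; exact: proj2_sig (constructive_indefinite_description _ (A j)).
pose h j := pr (wit j).
have edge_info : forall e, e \in E -> exists u,
    R e.1.2 (wit e.1.1) u /\ pr u = h e.2 /\ col u = col (wit e.2).
  move=> e He.
  have [_ Hw1] := (holds_chi _ _ _ _ _ _).1 (Hwit e.1.1).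
  have [u [Ru Hu]] := Hw1 e He erefl.
  have [Hw2 _] := (holds_chi _ _ _ _ _ _).1 (Hwit e.2).
  have [H1 H2] := F _ _ _ Hu Hw2.
  by exists u.
have h0 : h ord0 = w0.
  have Hc := eta_head Heta.
  have [H0 _] := (holds_chi _ _ _ _ _ _).1 Hc.
  have [Hw0 _] := (holds_chi _ _ _ _ _ _).1 (Hwit ord0).
  by have [Hpr _] := F _ _ _ Hw0 H0; exact: Hpr.
have RRp : forall l a b, R l a b -> Rp l (pr a) (pr b).
  move=> l a b [[H _]|[[H _] _]] //; exact: ((Hiff _ _ _).1 H).1.
have Hhom : is_hom E Rp w0 h.
  split => // e He; have [u [Ru [Hu _]]] := edge_info e He.
  by rewrite -Hu /h; apply: RRp.
have [Himg Hrefl] := Hv h Hhom.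
have Hsig : forall j, exists i, h i = g j.
  move=> j; apply/(Himg (g j)); by exists j.
pose sg j := proj1_sig (constructive_indefinite_description _ (Hsig j)).
have Hsg : forall j, h (sg j) = g j.
  move=> j; exact: proj2_sig (constructive_indefinite_description _ (Hsig j)).
have sg_inj : injective sg.
  by move=> j j' Hj; apply: Hginj; rewrite -!Hsg Hj.
have [sg' Hc1 Hc2] := injF_bij sg_inj.
have Hh : forall i, h i = g (sg' i) by move=> i; rewrite -Hsg Hc2.
have h_inj : injective h.
  move=> i i' Hi; rewrite -(Hc2 i) -(Hc2 i'); congr sg; apply: Hginj; by rewrite -!Hh.
have prNone : forall x : W, piV x = None -> pr x = w0 by case.
have oneway : forall a b l, Rm l (h a) (h b) -> h a <> w0 -> h b <> w0 ->
    col (wit a) = col (wit b).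
  move=> a b l Hm Ha Hb.
  have Hab := Hrefl a b l ((Hiff _ _ _).1 Hm).1.
  have [u [Ru [Hu Hcu]]] := edge_info _ Hab.
  move: Ru Hu Hcu => /= Ru Hu Hcu.
  case: Ru => [[_ [Heq|[Hn|Hn]]]|[[_ Hn] _]].
  - by rewrite -Hcu /col Heq.
  - by exfalso; apply: Ha; apply: prNone.
  - by exfalso; apply: Hb; rewrite -Hu; apply: prNone.
  - by exfalso; apply: Hn; rewrite Hu.
have Hchain : forall q a0 i0, h i0 = a0 ->
    chain (fun a c => exists l, Rm l a c \/ Rm l c a) a0 q ->
    (forall a, a \in a0 :: q -> a <> w0 /\ exists i, g i = a) ->
    forall i1, h i1 = last a0 q -> col (wit i1) = col (wit i0).
  elim=> [|a1 q IH] a0 i0 Hi0 /=.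
  - by move=> _ _ i1; rewrite -Hi0 => /h_inj ->.
  - case=> [[l Hl] Hq] Hall i1 Hi1.
    have Ha1in : a1 \in a0 :: a1 :: q by rewrite !in_cons eqxx orbT.
    have [Ha1 [j Hj]] := Hall a1 Ha1in.
    have [i Hi] : exists i, h i = a1 by apply/(Himg a1); exists j.
    have [Ha0 _] := Hall a0 (mem_head _ _).
    have Hall' : forall a, a \in a1 :: q -> a <> w0 /\ exists i, g i = a.
      by move=> a Ha; apply: Hall; rewrite in_cons Ha orbT.
    rewrite (IH a1 i Hi Hq Hall' i1 Hi1).
    case: Hl => Hl.
    + by apply: esym; apply: (oneway i0 i l); rewrite ?Hi0 ?Hi.
    + by apply: (oneway i i0 l); rewrite ?Hi0 ?Hi.
have [e [He HnRm]] : exists e, e \in E /\ ~ Rm e.1.2 (h e.1.1) (h e.2).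
  apply: NNPP => Hn; apply: Hnd; exists h; split => // e He.
  apply: NNPP => H; apply: Hn; by exists e.
have Hp := Hhom.2 e He.
have [Hl [H1 H2]] : e.1.2 = ld /\ h e.1.1 = g xd /\ h e.2 = g xd'.
  apply: NNPP => Hn; apply: HnRm; apply/Hiff; by split.
have [u [Ru [Hu Hcu]]] := edge_info e He.
have Hneq : col (wit e.1.1) <> col (wit e.2).
  case: Ru => [[Hm _]|[_ [v1 [v2 [Hv1 Hv2 HE]]]]].
  - by exfalso; apply: HnRm; rewrite -Hu /h.
  - rewrite -Hcu /col Hv1 Hv2 => [[]]; exact: Htau HE.
apply: Hneq; apply: esym; apply: (Hchain p (g xd) e.1.1 H1 Hch Hpts).
by rewrite Hlast.
Qed.

End Pseudo2.

Theorem mainTheorem5 (L : eqType) (n : nat) (E ET : seq (edge n L)) (d : nat)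
  (Wpm : finType) (w0 : Wpm) (Rp Rm : L -> Wpm -> Wpm -> Prop)
  (xd xd' : 'I_n.+1) (ld : L) (g : 'I_n.+1 -> Wpm)
  (V : Type) (EG : V -> V -> Prop) :
  (* D: globally minimal rooted diagram with an inner cycle *)
  uniq E -> rooted E -> globally_minimal E -> has_inner_cycle E ->
  (* fixed spanning tree of depth d used to define gamma *)
  spanning_tree E ET -> tree_depth ET d ->
  (* g : injective homomorphism D -> F_+ *)
  injective g -> is_hom E Rp w0 g ->
  (* (C-i) *)
  Rp ld (g xd) (g xd') ->
  (forall l u v, Rm l u v <-> (Rp l u v /\ ~ (l = ld /\ u = g xd /\ v = g xd'))) ->
  (* (C-ii), (C-iii) *)
  ~ dsat E Rm w0 -> dsat E Rp w0 ->
  (* (C-iv) *)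
  (exists p : seq Wpm,
      [/\ chain (fun a c => exists l, Rm l a c \/ Rm l c a) (g xd) p,
          last (g xd) p = g xd'
        & forall a, a \in g xd :: p -> a <> w0 /\ exists i, g i = a]) ->
  (* (C-v) *)
  (forall h : 'I_n.+1 -> Wpm, is_hom E Rp w0 h ->
      (forall w, (exists i, h i = w) <-> (exists i, g i = w)) /\
      (forall i j l, Rp l (h i) (h j) -> (i, l, j) \in E)) ->
  (* (C-vi) *)
  (forall w, w <> w0 -> dsat E Rm w) ->
  (* G is a graph: symmetric edge relation *)
  (forall v1 v2, EG v1 v2 -> EG v2 v1) ->
  (* (C1) *)
  (forall k, ~ colourable EG (2 ^ (#|Wpm| * k)) ->
     (forall th, kgen th k -> forall m x,
        holds (pp_rel w0 Rp Rm EG) th (gamma E ET d m) x) /\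
     fvalid (pp_rel w0 Rp Rm EG) (gamma E ET d k)) /\
  (* (C2) *)
  (forall N, colourable EG N ->
     ~ fvalid (pp_rel w0 Rp Rm EG) (gamma E ET d (N * (#|Wpm| - 1) + 1))).
Proof.
move=> Huniq Hroot Hmin Hcyc HST HTD Hginj Hhom Hspec Hiff Hnd Hdp Hiv Hv Hvi Hsym.
have [Hxd Hxd'] : g xd != w0 /\ g xd' != w0.
  case: Hiv => p [_ Hlast Hpts]; split; apply/eqP.
  - exact: (Hpts _ (mem_head _ _)).1.
  - apply: (Hpts _ _).1; rewrite -Hlast; exact: mem_last.
split.
- move=> k Hc; split.
  + move=> th [s [Hs Hnot]] m x.
    apply: (C1core (k:=k) (s:=s) (m:=m) HST HTD Hhom Hiff Hxd Hxd' Hvi Hsym Hs _ Hc).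
    by move=> p _ Hp; apply: Hnot.
  + move=> th x.
    apply: (C1core (k:=k) (s:=iota 1 k) (m:=k) HST HTD Hhom Hiff Hxd Hxd' Hvi Hsym _ _ Hc).
    - by rewrite size_iota.
    - by move=> p Hp; rewrite Hp.
- move=> N HcN; exact: (C2core (N:=N) HST HTD Hginj Hiff Hnd Hiv Hv HcN).
Qed.
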